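(* In one-to-one matching games with additive externalities, the optimistic pairwise stable set of a game coincides with its weak optimistic stable set.
   Context: Agents: $N=M\cup W$ with $M,W$ disjoint finite sets. A match is a pair $(m,w)$ with $m\in M$, $w\in W$; a one-to-one matching is a set of matches in which every agent appears in at most one match. Forming a match requires consent of both endpoints; severing can be done unilaterally. A game is $G=(M,W,\Pi)$ where $\Pi(m,w\mid z)\in\mathbb{R}$ is the value agent $z$ receives from the formation of match $(m,w)$; utility is $u(z,\mathcal{A})=\sum_{(m,w)\in\mathcal{A}}\Pi(m,w\mid z)$. A coalition $B\subseteq N$ deviates from $\mathcal{A}$ by rearranging matches among its members and deleting matches of its members with agents outside $B$ (keeping the result one-to-one), with every member performing at least one action (severing a match or forming a new match with another member of $B$). Under optimistic reasoning each member $i\in B$ evaluates the deviation assuming the agents in $N\setminus B$ organize themselves in the best possible way for $i$. The weak optimistic stable set is the set of one-to-one matchings for which no coalition has a deviation under which all its members strictly improve (under optimistic reasoning). The optimistic pairwise stable set is the set of one-to-one matchings with no blocking coalition of size one or two under optimistic reasoning (a single agent cutting its match; or two agents forming a new match with each other while possibly cutting previous matches, or coordinating to cut existing matches). *)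

(* Defs.v *)
From mathcomp Require Import all_boot all_order all_algebra.
Set Implicit Arguments. Unset Strict Implicit. Unset Printing Implicit Defensive.
Import Order.TTheory GRing.Theory Num.Theory.
Local Open Scope ring_scope.

(* A game is given by Pi : M -> W -> (M + W) -> R, Pi m w z being the value
   agent z receives from the formation of match (m, w). *)

Section Matching.
Variables (R : realFieldType) (M W : finType).
Notation agent := (M + W)%type.

Definition involves (a : agent) (p : M * W) : bool :=
  (a == inl p.1) || (a == inr p.2).

Definition one_to_one (A : {set M * W}) : Prop :=
  forall p q, p \in A -> q \in A -> (p.1 = q.1 \/ p.2 = q.2) -> p = q.

Definition touches (B : {set agent}) (p : M * W) : bool :=
  (inl p.1 \in B) || (inr p.2 \in B).

Definition deviation (A : {set M * W}) (B : {set agent}) (A' : {set M * W}) : Prop :=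
  [/\ one_to_one A',
      (forall p, p \in A' -> p \notin A -> (inl p.1 \in B) && (inr p.2 \in B)),
      (forall p, p \in A -> p \notin A' -> touches B p) &
      (forall i, i \in B -> exists2 p, p \in (A :\: A') :|: (A' :\: A) & involves i p)].

Definition util (Pi : M -> W -> agent -> R) (z : agent) (A : {set M * W}) : R :=
  \sum_(p in A) Pi p.1 p.2 z.

(* F is a way the agents outside B may organize themselves after B deviated
   to A': F is one-to-one and coincides with A' on all matches touching B
   (outsiders can form any matching among themselves). *)
Definition outsiders_response (B : {set agent}) (A' F : {set M * W}) : Prop :=
  one_to_one F /\ (forall p, touches B p -> (p \in F) = (p \in A')).

(* optimistic reasoning: i strictly improves if the best organisation of the
   outsiders (for i) gives i strictly more than u(i, A). *)
Definition opt_improves (Pi : M -> W -> agent -> R) (A : {set M * W})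
    (B : {set agent}) (A' : {set M * W}) (i : agent) : Prop :=
  exists2 F, outsiders_response B A' F & util Pi i A < util Pi i F.

Definition opt_blocks (Pi : M -> W -> agent -> R) (A : {set M * W})
    (B : {set agent}) : Prop :=
  B != set0 /\
  exists2 A', deviation A B A' & forall i, i \in B -> opt_improves Pi A B A' i.

Definition weak_opt_stable (Pi : M -> W -> agent -> R) (A : {set M * W}) : Prop :=
  one_to_one A /\ forall B : {set agent}, ~ opt_blocks Pi A B.

Definition opt_pairwise_stable (Pi : M -> W -> agent -> R) (A : {set M * W}) : Prop :=
  one_to_one A /\ forall B : {set agent}, (#|B| <= 2)%N -> ~ opt_blocks Pi A B.

End Matching.

(* Main.v *)
Require Import Defs.
From mathcomp Require Import all_boot all_order all_algebra.

Lemma inv_share (M W : finType) (i : (M + W)%type) (p q : M * W) :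
  involves i p -> involves i q -> p.1 = q.1 \/ p.2 = q.2.
Proof.
rewrite /involves => /orP[]/eqP-> /orP[]/eqP //; case; auto.
Qed.

Lemma touches_sub (M W : finType) (B1 B2 : {set (M + W)%type}) (r : M * W) :
  B1 \subset B2 -> touches B1 r -> touches B2 r.
Proof.
move/subsetP=> s; rewrite /touches => /orP[/s->|/s->]; by rewrite ?orbT.
Qed.

Theorem theorem14 (R : realFieldType) (M W : finType)
    (Pi : M -> W -> (M + W)%type -> R) (A : {set M * W}) :
  opt_pairwise_stable Pi A <-> weak_opt_stable Pi A.
Proof.
split; last by case=> oA H; split=> // B _; exact: H.
case=> oA H; split=> // B [B0 [A' dev imp]].
case: dev => o' newm sev act.
case/set0Pn: B0 => i iB.
case: (pickP (fun p => (p \in A') && involves i p)) => [p /andP[pA' ip] | none].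
- case pA: (p \in A).
  + case: (act i iB) => q; rewrite !inE => /orP[/andP[qnA' qA]|/andP[qnA qA']] iq.
    * have qp : q = p by apply: oA => //; apply: inv_share iq ip.
      by move: qnA'; rewrite qp pA'.
    * have qp : q = p by apply: o' => //; apply: inv_share iq ip.
      by move: qnA; rewrite qp pA.
  + have /andP[b1 b2] := newm p pA' (negbT pA).
    have sB : [set (inl p.1 : (M + W)%type); inr p.2] \subset B.
      by apply/subsetP=> x; rewrite !inE => /orP[]/eqP->.
    apply: (H [set (inl p.1 : (M + W)%type); inr p.2]).
      by rewrite cards2; case: (_ != _).
    split.
      by apply/set0Pn; exists (inl p.1); rewrite !inE eqxx.
    exists (p |: [set r in A | ~~ touches [set (inl p.1 : (M + W)%type); inr p.2] r]).
    * split.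
      - move=> r s; rewrite !inE => /orP[/eqP->|/andP[rA rt]] /orP[/eqP->|/andP[sA st]] sh //.
        + exfalso; move: st; rewrite /touches !inE.
          by case: sh => <-; rewrite eqxx ?orbT.
        + exfalso; move: rt; rewrite /touches !inE.
          by case: sh => ->; rewrite eqxx ?orbT.
        + exact: oA.
      - move=> r; rewrite !inE => /orP[/eqP->|/andP[rA _]]; last by rewrite rA.
        by rewrite ?inE ?eqxx ?orbT.
      - move=> r rA; rewrite !inE rA /= negb_or => /andP[_].
        by rewrite negbK.
      - move=> k; rewrite !inE => /orP[] /eqP ->; exists p;
          rewrite /involves ?eqxx ?orbT // !inE pA eqxx /= ?orbT //.
    * move=> k kB.
      have kB' : k \in B by apply: (subsetP sB).
      case: (imp k kB') => F [oF FA'] lt.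
      exists F => //; split=> // r rt.
      rewrite FA'; last exact: touches_sub sB rt.
      apply/idP/idP.
      - move=> rA'.
        have sh : r.1 = p.1 \/ r.2 = p.2.
          by move: rt; rewrite /touches !inE => /orP[]/orP[]/eqP[]; auto.
        by rewrite (o' r p rA' pA' sh) !inE eqxx.
      - rewrite !inE => /orP[/eqP->//|/andP[_]]; by rewrite rt.
- have [q qA /andP[qnA' iq]] : exists2 q, q \in A & (q \notin A') && involves i q.
    case: (act i iB) => q; rewrite !inE => /orP[/andP[qnA' qA]|/andP[qnA qA']] iq.
    + by exists q => //; rewrite qnA' iq.
    + by move: (none q); rewrite qA' iq.
  apply: (H [set i]); first by rewrite cards1.
  split; first by apply/set0Pn; exists i; rewrite inE.
  exists [set r in A | ~~ involves i r].
  + split.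
    * by move=> r s; rewrite !inE => /andP[rA _] /andP[sA _]; exact: oA.
    * by move=> r; rewrite inE => /andP[rA _]; rewrite rA.
    * move=> r rA; rewrite inE rA /= negbK => ir.
      move: ir; rewrite /touches /involves !inE.
      by rewrite ![_ == i]eq_sym.
    * move=> k; rewrite inE => /eqP->; exists q => //.
      by rewrite !inE qA iq.
  + move=> k; rewrite inE => /eqP->.
    case: (imp i iB) => F [oF FA'] lt; exists F => //; split=> // r rt.
    have ir : involves i r.
      by move: rt; rewrite /touches /involves !inE ![_ == i]eq_sym.
    rewrite FA'; last by apply: touches_sub rt; rewrite sub1set.
    move: (none r); rewrite ir andbT => ->.
    by rewrite inE ir andbF.
Qed.
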